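(* Let $m\ge 1$ and $x\in RF(m)$. Then for every choice, for each $k\in\{1,\dots,m-1\}$, of one of the two forms $[\omega,x_k]$ or $[x_k,\omega]$, there exist integers $\alpha_1,\dots,\alpha_m$ and elements $\omega_1,\dots,\omega_{m-1}\in RF(m)$ such that $$x=x_m^{\alpha_m}x_{m-1}^{\alpha_{m-1}}\cdots x_1^{\alpha_1}\,z_1z_2\cdots z_{m-1},$$ where $z_k=[\omega_k,x_k]$ or $z_k=[x_k,\omega_k]$ according to the chosen form.
   Context: $RF(m)$ is the reduced free group on $x_1,\dots,x_m$: the quotient of the free group $F(x_1,\dots,x_m)$ by the relations that each $x_i$ commutes with every conjugate $\gamma x_i\gamma^{-1}$ of itself. Commutators are $[g,h]=g^{-1}h^{-1}gh$. *)

(* Defs.v *)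
(* The reduced free group RF(m) is presented concretely:
   elements are words in the letters x_i^{+1}, x_i^{-1} (i : 'I_m, where the
   ordinal i stands for the generator x_{i+1}), and equality in RF(m) is the
   congruence [rf_eq m] generated by free cancellation and the defining
   relations  x_i (g x_i g^-1) = (g x_i g^-1) x_i  for every word g. *)
From mathcomp Require Import all_boot all_order all_algebra.
Set Implicit Arguments. Unset Strict Implicit. Unset Printing Implicit Defensive.

(* a letter: (i, true) = x_{i+1}, (i, false) = x_{i+1}^{-1} *)
Definition letter (m : nat) := ('I_m * bool)%type.
Definition word (m : nat) := seq (letter m).

Definition flip {m} (a : letter m) : letter m := (a.1, ~~ a.2).

Definition winv {m} (w : word m) : word m := rev (map flip w).
Definition gen {m} (i : 'I_m) : word m := [:: (i, true)].

Definition wpow {m} (i : 'I_m) (n : int) : word m :=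
  match n with
  | Posz k => nseq k (i, true)
  | Negz k => nseq k.+1 (i, false)
  end.

Definition wcomm {m} (g h : word m) : word m := winv g ++ winv h ++ g ++ h.

Inductive rf_eq (m : nat) : word m -> word m -> Prop :=
| rf_refl w : rf_eq w w
| rf_sym u v : rf_eq u v -> rf_eq v u
| rf_trans u v w : rf_eq u v -> rf_eq v w -> rf_eq u w
| rf_cancel (u v : word m) (a : letter m) :
    rf_eq (u ++ a :: flip a :: v) (u ++ v)
| rf_rel (u v g : word m) (i : 'I_m) :
    rf_eq (u ++ gen i ++ (g ++ gen i ++ winv g) ++ v)
          (u ++ (g ++ gen i ++ winv g) ++ gen i ++ v).

(* Main.v *)
Require Import Defs.
From mathcomp Require Import all_boot all_order all_algebra.
From Stdlib Require Import Setoid Morphisms.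
Set Implicit Arguments. Unset Strict Implicit. Unset Printing Implicit Defensive.

Notation "u =R v" := (rf_eq u v) (at level 70).

Lemma rf_ctx m (p q a b : word m) : a =R b -> p ++ a ++ q =R p ++ b ++ q.
Proof.
elim=> {a b}.
- move=> w; exact: rf_refl.
- move=> u v _ H; exact: rf_sym.
- move=> u v w _ H1 _ H2; exact: rf_trans H1 H2.
- move=> u v a.
  have := rf_cancel (p ++ u) (v ++ q) a. by rewrite -!catA /=.
- move=> u v g i. have := rf_rel (p ++ u) (v ++ q) g i. by rewrite -!catA.
Qed.

#[global] Instance rf_Equiv m : Equivalence (@rf_eq m).
Proof. split; [exact: rf_refl | exact: rf_sym | exact: rf_trans]. Qed.

#[global] Instance cat_Proper m : Proper (@rf_eq m ==> @rf_eq m ==> @rf_eq m) cat.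
Proof.
move=> a b H c d H'. apply: rf_trans (_ : a ++ d =R _).
- have := rf_ctx a [::] H'. by rewrite !cats0.
- have := rf_ctx [::] d H. by [].
Qed.

#[global] Hint Resolve rf_refl : core.

Lemma winv_cat m (u v : word m) : winv (u ++ v) = winv v ++ winv u.
Proof. by rewrite /winv map_cat rev_cat. Qed.

Lemma winvK m (u : word m) : winv (winv u) = u.
Proof.
rewrite /winv map_rev revK -map_comp -[RHS]map_id; apply: eq_map => -[i b] /=.
by rewrite /flip /= negbK.
Qed.

Lemma winv_nil m : winv ([::] : word m) = [::]. Proof. by []. Qed.
Lemma winv1 m (a : letter m) : winv [:: a] = [:: flip a]. Proof. by []. Qed.
Lemma flipK m (a : letter m) : flip (flip a) = a.
Proof. by case: a => i b; rewrite /flip /= negbK. Qed.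

Lemma cancel1 m (a : letter m) : [:: a; flip a] =R [::].
Proof. exact: (rf_cancel [::] [::] a). Qed.

Lemma invr m (w : word m) : w ++ winv w =R [::].
Proof.
elim: w => [|a w IH]; first exact: rf_refl.
have -> : winv (a :: w) = winv w ++ [:: flip a] by rewrite -cat1s winv_cat.
rewrite -cat1s -catA (catA w) -(cat1s a) catA.
rewrite -(catA [:: a]) IH /=. exact: cancel1.
Qed.

Lemma invl m (w : word m) : winv w ++ w =R [::].
Proof. have := invr (winv w). by rewrite winvK. Qed.

Lemma cK m (u w : word m) : u ++ (winv u ++ w) =R w.
Proof. by rewrite catA invr. Qed.
Lemma Kc m (u w : word m) : winv u ++ (u ++ w) =R w.
Proof. by rewrite catA invl. Qed.

#[global] Instance winv_Proper m : Proper (@rf_eq m ==> @rf_eq m) winv.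
Proof.
move=> a b H.
transitivity (winv a ++ (b ++ winv b)); first by rewrite invr cats0.
by rewrite catA -{1}H invl.
Qed.

Definition cj m (g w : word m) := winv g ++ w ++ g.

#[global] Instance cj_Proper m : Proper (@rf_eq m ==> @rf_eq m ==> @rf_eq m) (@cj m).
Proof. move=> a b H c d H'. by rewrite /cj H H'. Qed.

#[global] Instance wcomm_Proper m : Proper (@rf_eq m ==> @rf_eq m ==> @rf_eq m) (@wcomm m).
Proof. move=> a b H c d H'. by rewrite /wcomm H H'. Qed.

Ltac norm := rewrite /cj /wcomm ?winv_cat ?winvK -?catA.
Ltac canc := repeat (first [ rewrite cK | rewrite Kc | rewrite invr | rewrite invl | rewrite cats0 ]).
Ltac grp := norm; canc; try reflexivity.

Lemma cj_cat m (g u v : word m) : cj g (u ++ v) =R cj g u ++ cj g v.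
Proof. grp. Qed.

Lemma cjcj m (g h w : word m) : cj g (cj h w) = cj (h ++ g) w.
Proof. by norm. Qed.

Lemma cj_nil m (w : word m) : cj [::] w = w.
Proof. by rewrite /cj cats0. Qed.

Lemma cj_nilw m (g : word m) : cj g [::] =R [::].
Proof. grp. Qed.

Lemma cj_winv m (g w : word m) : winv (cj g w) = cj g (winv w).
Proof. by norm. Qed.

Lemma cjK m (g w : word m) : cj (winv g) (cj g w) =R w.
Proof. grp. Qed.

Lemma cj_comm m (g a b : word m) : cj g (wcomm a b) =R wcomm (cj g a) (cj g b).
Proof. grp. Qed.

Lemma I1 m (w a : word m) : cj a w =R w ++ wcomm w a.
Proof. grp. Qed.

Lemma I2 m (w a b : word m) : wcomm w (a ++ b) =R wcomm w b ++ cj b (wcomm w a).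
Proof. grp. Qed.

Lemma I3 m (u w g : word m) : wcomm (u ++ w) g =R cj w (wcomm u g) ++ wcomm w g.
Proof. grp. Qed.

Lemma I4 m (d h b : word m) : wcomm d (cj h b) =R cj h (wcomm (cj (winv h) d) b).
Proof. grp. Qed.

Lemma I5 m (n y : word m) : wcomm n (winv y) =R winv (wcomm (cj (winv y) n) y).
Proof. grp. Qed.

Lemma I6 m (w n x : word m) :
  wcomm (w ++ n) x =R wcomm w x ++ wcomm (cj (wcomm w x) n) (cj (w ++ x) x).
Proof. grp. Qed.

Lemma I7 m (w n x : word m) :
  wcomm x (w ++ n) =R wcomm x w ++ wcomm (cj (x ++ wcomm x w) n) (cj w (winv x)).
Proof. grp. Qed.
Definition commute m (u v : word m) := u ++ v =R v ++ u.

Lemma commute_sym m (u v : word m) : commute u v -> commute v u.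
Proof. by rewrite /commute => ->. Qed.

Lemma commute_eq m (u u' v : word m) : u =R u' -> commute u v -> commute u' v.
Proof. by rewrite /commute => ->. Qed.

Lemma commute_inv m (u v : word m) : commute u v -> commute (winv u) v.
Proof.
rewrite /commute => H.
transitivity (winv u ++ (v ++ u) ++ winv u); first by rewrite -catA invr cats0.
by rewrite -H -catA Kc.
Qed.

Lemma commute_cat m (u v w : word m) : commute u v -> commute u w -> commute u (v ++ w).
Proof. rewrite /commute => H1 H2. by rewrite catA H1 -catA H2 catA. Qed.

Lemma commute_nil m (u : word m) : commute u [::].
Proof. by rewrite /commute cats0. Qed.

Lemma commute_cj m (g u v : word m) : commute u v -> commute (cj g u) (cj g v).
Proof. rewrite /commute => H. by rewrite -!cj_cat H. Qed.

Lemma cj_commute m (g u : word m) : commute g u -> cj g u =R u.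
Proof. rewrite /commute /cj => H. by rewrite -H Kc. Qed.

Lemma wcomm_commute m (u v : word m) : commute u v -> wcomm u v =R [::].
Proof. rewrite /commute /wcomm => H. by rewrite H Kc invl. Qed.

Inductive NC m (i : 'I_m) : word m -> Prop :=
| NC0 : NC i [::]
| NCc g e w : NC i w -> NC i (cj g [:: (i, e)] ++ w)
| NCe w w' : NC i w -> w =R w' -> NC i w'.

Lemma NC_eq m i (w w' : word m) : NC i w -> w =R w' -> NC i w'.
Proof. exact: NCe. Qed.

#[global] Instance NC_Proper m i : Proper (@rf_eq m ==> iff) (@NC m i).
Proof. move=> a b E; split => H; apply: NC_eq H _; by rewrite E. Qed.

Lemma NC_cat m i (u v : word m) : NC i u -> NC i v -> NC i (u ++ v).
Proof.
elim=> [|g e w _ IH|w w' _ IH E] Hv //.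
- rewrite -catA. apply: NCc. exact: IH.
- apply: NCe (IH Hv) _. by rewrite E.
Qed.

Lemma NC_cj m i (g u : word m) : NC i u -> NC i (cj g u).
Proof.
elim=> [|h e w _ IH|w w' _ IH E].
- apply: NCe (NC0 i) _. by rewrite cj_nilw.
- apply: NCe (NCc (h ++ g) e IH) _. by rewrite cj_cat cjcj.
- apply: NCe IH _. by rewrite E.
Qed.

Lemma NC_inv m i (u : word m) : NC i u -> NC i (winv u).
Proof.
elim=> [|h e w _ IH|w w' _ IH E].
- exact: NC0.
- rewrite winv_cat cj_winv winv1. apply: NC_cat => //.
  have := NCc h (~~ e) (NC0 i). by rewrite cats0.
- apply: NCe IH _. by rewrite E.
Qed.

Lemma NC_letter m (i : 'I_m) e : NC i [:: (i, e)].
Proof. have := NCc [::] e (NC0 i). by rewrite cj_nil cats0. Qed.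

Lemma NC_comm_base m (i : 'I_m) (k : word m) : commute [:: (i, true)] (cj k [:: (i, true)]).
Proof.
have := rf_rel [::] [::] (winv k) i. rewrite !cats0 /= winvK.
by rewrite /commute /cj /gen.
Qed.

Lemma NC_comm_letters m (i : 'I_m) e e' (g h : word m) :
  commute (cj g [:: (i, e)]) (cj h [:: (i, e')]).
Proof.
suff H : forall e e' k, commute [:: (i, e)] (cj k [:: (i, e')]).
  have K := commute_cj g (H e e' (h ++ winv g)). rewrite cjcj in K.
  apply: commute_sym; apply: (commute_eq _ (commute_sym K)). grp.
move=> {}e {}e' k.
have H1 : forall b, commute [:: (i, b)] (cj k [:: (i, true)]).
  case; first exact: NC_comm_base.
  exact: (commute_inv (NC_comm_base i k)).
case: e'; first exact: H1.
apply: commute_sym. have := commute_inv (commute_sym (H1 e)).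
by rewrite cj_winv.
Qed.

Lemma NC_comm m i (u v : word m) : NC i u -> NC i v -> commute u v.
Proof.
suff H : forall g e v, NC i v -> commute (cj g [:: (i, e)]) v.
  elim=> [|g e w _ IH|w w' _ IH E] Hv.
  - apply: commute_sym; exact: commute_nil.
  - apply: commute_sym. apply: commute_cat; apply: commute_sym; [exact: H | exact: IH].
  - apply: commute_eq (IH Hv). exact: E.
move=> g e {}v; elim=> [|h e' w _ IH|w w' _ IH E].
- exact: commute_nil.
- apply: commute_cat => //. exact: NC_comm_letters.
- apply: commute_sym; apply: commute_eq (commute_sym IH). exact: E.
Qed.
Definition gN n (k : nat) : word n.+1 := [:: (inord k, true)].
Definition Nj n (j : nat) (w : word n.+1) := NC (inord j) w.
Definition F n (l : seq nat) (m y : nat -> word n.+1) :=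
  flatten [seq wcomm (m k) (y k) | k <- l].
Definition Lset n (j : nat) := [seq k <- iota 0 n.+1 | k != j].
Definition Vg n j (y : nat -> word n.+1) v :=
  exists m, (forall k, Nj j (m k)) /\ v =R F (Lset n j) m y.

Lemma wcomm_nil_l m (y : word m) : wcomm [::] y =R [::].
Proof. by rewrite /wcomm winv_nil !cat0s invl. Qed.
Lemma wcomm_nil_r m (y : word m) : wcomm y [::] =R [::].
Proof. by rewrite /wcomm winv_nil !cat0s cats0 invl. Qed.

Lemma wcommE m (a y : word m) : wcomm a y = winv a ++ cj y a.
Proof. by norm. Qed.

Lemma NC_wcomm m i (a y : word m) : NC i a -> NC i (wcomm a y).
Proof. move=> H. rewrite wcommE. apply: NC_cat; [apply: NC_inv | apply: NC_cj]; exact: H. Qed.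

Lemma F_N n j l (m y : nat -> word n.+1) : (forall k, Nj j (m k)) -> Nj j (F l m y).
Proof.
move=> H; elim: l => [|k l IH] /=; first by apply: NC0.
apply: NC_cat => //. apply: NC_wcomm; exact: H.
Qed.

Lemma F_cons n l k (m y : nat -> word n.+1) : F (k :: l) m y = wcomm (m k) (y k) ++ F l m y.
Proof. by []. Qed.

Lemma F_cat n l1 l2 (m y : nat -> word n.+1) : F (l1 ++ l2) m y = F l1 m y ++ F l2 m y.
Proof. by rewrite /F map_cat flatten_cat. Qed.

Lemma F_ext n l (m m' y y' : nat -> word n.+1) :
  (forall k, k \in l -> m k = m' k /\ y k = y' k) -> F l m y = F l m' y'.
Proof.
move=> H; rewrite /F; congr flatten; apply/eq_in_map => k /H [-> ->]. by [].
Qed.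

Lemma F_merge n j l (m1 m2 y : nat -> word n.+1) :
  (forall k, Nj j (m1 k)) -> (forall k, Nj j (m2 k)) ->
  F l m1 y ++ F l m2 y =R F l (fun k => m1 k ++ m2 k) y.
Proof.
move=> H1 H2; elim: l => [|k l IH] /=; first by [].
rewrite -/(F l m1 y) -/(F l m2 y) -/(F l _ y).
have C : commute (F l m1 y) (wcomm (m2 k) (y k)).
  apply: (NC_comm (i := inord j)); [apply: F_N; exact: H1 | apply: NC_wcomm; exact: H2].
rewrite -catA (catA (F l m1 y)) C -(catA (wcomm _ _)) IH catA.
have E : wcomm (m1 k) (y k) ++ wcomm (m2 k) (y k) =R wcomm (m1 k ++ m2 k) (y k).
  rewrite I3 cj_commute //.
  apply: (NC_comm (i := inord j)); first exact: H2. apply: NC_wcomm; exact: H1.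
by rewrite E.
Qed.

Lemma F_nil n l (y : nat -> word n.+1) : F l (fun _ => [::]) y =R [::].
Proof.
elim: l => [|k l IH] //. by rewrite F_cons IH wcomm_nil_l.
Qed.

Lemma F_single n l k (a : word n.+1) (y : nat -> word n.+1) :
  uniq l -> k \in l -> F l (fun i => if i == k then a else [::]) y =R wcomm a (y k).
Proof.
elim: l => [|k' l IH] // ul kl; rewrite F_cons.
move: ul => /= /andP[nk' ul]; move: kl; rewrite in_cons => /orP[/eqP E|kl].
- subst k'. rewrite eqxx.
  rewrite (F_ext (m' := fun _ => [::]) (y' := y)); first by rewrite F_nil cats0.
  move=> i il; split => //. case: eqP => // E; subst i. by rewrite il in nk'.
- have -> : (k' == k) = false. apply/negbTE; apply: contraNneq nk' => ->. by [].
  rewrite IH //. by rewrite wcomm_nil_l.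
Qed.

Lemma winv_wcomm_N m i (a y : word m) : NC i a -> winv (wcomm a y) =R wcomm (winv a) y.
Proof.
move=> H.
have -> : winv (wcomm a y) = cj y (winv a) ++ a by norm.
have -> : wcomm (winv a) y = a ++ cj y (winv a) by norm.
apply: (NC_comm (i := i)) => //. apply: NC_cj; apply: NC_inv; exact: H.
Qed.

Lemma F_inv n j l (m y : nat -> word n.+1) :
  (forall k, Nj j (m k)) -> winv (F l m y) =R F l (fun k => winv (m k)) y.
Proof.
move=> H; elim: l => [|k l IH] //.
rewrite !F_cons winv_cat IH (winv_wcomm_N (i := inord j)); last exact: H.
apply: (NC_comm (i := inord j)).
- apply: F_N => i; apply: NC_inv; exact: H.
- apply: NC_wcomm; apply: NC_inv; exact: H.
Qed.

Lemma Lset_uniq n j : uniq (Lset n j).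
Proof. by rewrite filter_uniq // iota_uniq. Qed.

Lemma mem_Lset n j k : (k \in Lset n j) = (k < n.+1) && (k != j).
Proof. by rewrite mem_filter mem_iota add0n andbC. Qed.

Lemma Vg_eq n j y (v v' : word n.+1) : Vg j y v -> v =R v' -> Vg j y v'.
Proof. move=> [m [Hm E]] E'. exists m; split => //. by rewrite -E'. Qed.

#[global] Instance Vg_Proper n j y : Proper (@rf_eq n.+1 ==> iff) (@Vg n j y).
Proof. move=> a b E; split => H; apply: Vg_eq H _; by rewrite E. Qed.

#[global] Instance Nj_Proper n j : Proper (@rf_eq n.+1 ==> iff) (@Nj n j).
Proof. move=> a b E; rewrite /Nj; by rewrite E. Qed.

Lemma Vg_nil n j (y : nat -> word n.+1) : Vg j y [::].
Proof. exists (fun _ => [::]); split; first by move=> k; exact: NC0. by rewrite F_nil. Qed.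

Lemma Vg_cat n j y (v v' : word n.+1) : Vg j y v -> Vg j y v' -> Vg j y (v ++ v').
Proof.
move=> [m [Hm E]] [m' [Hm' E']]. exists (fun k => m k ++ m' k); split.
- move=> k; apply: NC_cat; [exact: Hm | exact: Hm'].
- by rewrite E E' F_merge.
Qed.

Lemma Vg_inv n j y (v : word n.+1) : Vg j y v -> Vg j y (winv v).
Proof.
move=> [m [Hm E]]. exists (fun k => winv (m k)); split.
- move=> k; apply: NC_inv; exact: Hm.
- by rewrite E F_inv.
Qed.

Lemma Vg_N n j y (v : word n.+1) : Vg j y v -> Nj j v.
Proof.
move=> [m [Hm E]]. apply: (NC_eq (@F_N n j (Lset n j) m y Hm)). by rewrite E.
Qed.

Lemma Vg_single n j y k (a : word n.+1) :
  k \in Lset n j -> Nj j a -> Vg j y (wcomm a (y k)).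
Proof.
move=> kL Ha. exists (fun i => if i == k then a else [::]); split.
- move=> i; case: eqP => _ //; exact: NC0.
- by rewrite F_single // Lset_uniq.
Qed.

Lemma Vg_single_inv n j y k (a : word n.+1) :
  k \in Lset n j -> Nj j a -> Vg j y (wcomm a (winv (y k))).
Proof.
move=> kL Ha. rewrite I5. apply: Vg_inv. apply: Vg_single => //. apply: NC_cj; exact: Ha.
Qed.

Lemma Vg_cj_y n j y k (v : word n.+1) :
  k \in Lset n j -> Vg j y v -> Vg j y (cj (y k) v) /\ Vg j y (cj (winv (y k)) v).
Proof.
move=> kL Hv; split; rewrite I1; apply: Vg_cat => //.
- apply: Vg_single => //; apply: Vg_N; exact: Hv.
- apply: Vg_single_inv => //; apply: Vg_N; exact: Hv.
Qed.

Lemma Vg_cj_letter n j (v : word n.+1) a : Vg j (@gN n) v -> Vg j (@gN n) (cj [:: a] v).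
Proof.
case: a => i e Hv.
have iE : i = inord (val i) by rewrite inord_val.
case: (eqVneq (val i) j) => [ij|nij].
- have HN := Vg_N Hv. apply: Vg_eq Hv _. symmetry. apply: cj_commute.
  apply: (NC_comm (i := inord j)).
  + rewrite iE ij; exact: NC_letter.
  + exact: HN.
- have kL : val i \in Lset n j by rewrite mem_Lset ltn_ord.
  have [H1 H2] := Vg_cj_y kL Hv.
  case: e.
  + by rewrite /gN -iE in H1.
  + by rewrite /gN -iE winv1 /flip /= in H2.
Qed.

Lemma Vg_cj_gN n j (g v : word n.+1) : Vg j (@gN n) v -> Vg j (@gN n) (cj g v).
Proof.
elim: g v => [|a g IH] v Hv; first by rewrite cj_nil.
have -> : cj (a :: g) v = cj g (cj [:: a] v) by rewrite cjcj.
apply: IH. apply: Vg_cj_letter; exact: Hv.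
Qed.
Lemma letter_eq n (i : 'I_n.+1) j : val i = j -> i = inord j.
Proof. by move=> <-; rewrite inord_val. Qed.

Lemma Vg_comm_letter n j (b : word n.+1) a : Nj j b -> Vg j (@gN n) (wcomm b [:: a]).
Proof.
case: a => i e Hb.
case: (eqVneq (val i) j) => [ij|nij].
- rewrite wcomm_commute; first exact: Vg_nil.
  apply: (NC_comm (i := inord j)); first exact: Hb.
  rewrite -(letter_eq ij); exact: NC_letter.
- have kL : val i \in Lset n j by rewrite mem_Lset ltn_ord.
  have iE := letter_eq (erefl (val i)).
  case: e.
  + have := Vg_single (@gN n) kL Hb. by rewrite /gN -iE.
  + have := Vg_single_inv (@gN n) kL Hb. by rewrite /gN -iE winv1.
Qed.

Lemma cjX n j (g : word n.+1) e v : Vg j (@gN n) v ->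
  exists v', Vg j (@gN n) v' /\ cj g ([:: (inord j, e)] ++ v) =R [:: (inord j, e)] ++ v'.
Proof.
elim: g v => [|a g IH] v Hv; first by exists v; rewrite cj_nil.
have -> : cj (a :: g) ([:: (inord j, e)] ++ v) = cj g (cj [:: a] ([:: (inord j, e)] ++ v))
  by rewrite cjcj.
have [v' [Hv' E]] := IH (wcomm [:: (inord j, e)] [:: a] ++ cj [:: a] v)
  (Vg_cat (Vg_comm_letter a (NC_letter _ e)) (Vg_cj_letter a Hv)).
exists v'; split => //. by rewrite (cj_cat [:: a]) (I1 [:: (inord j, e)] [:: a]) -catA E.
Qed.

Definition Xword n j (u : word n.+1) := all (fun a : letter n.+1 => a.1 == inord j) u.

Lemma Xword_N n j (u : word n.+1) : Xword j u -> Nj j u.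
Proof.
elim: u => [|[i e] u IH] /= H; first exact: NC0.
move/andP: H => [/eqP -> Hu].
apply: (NC_cat (u := [:: (inord j, e)])); [exact: NC_letter | exact: IH].
Qed.

Lemma claimA n j (w : word n.+1) : Nj j w ->
  exists u v, Xword j u /\ Vg j (@gN n) v /\ w =R u ++ v.
Proof.
elim=> [|g e w' _ [u [v [Hu [Hv E]]]]|w1 w2 _ [u [v [Hu [Hv E]]]] E'].
- exists [::], [::]; split => //; split => //; exact: Vg_nil.
- have [v1 [Hv1 E1]] := cjX g e (Vg_nil j (@gN n)).
  rewrite cats0 in E1.
  exists ((inord j, e) :: u), (v1 ++ v); split; first by rewrite /Xword /= eqxx.
  split; first exact: Vg_cat.
  rewrite E1 E -!catA.
  change ([:: (inord j, e)] ++ v1 ++ u ++ v =R [:: (inord j, e)] ++ u ++ v1 ++ v).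
  have C : commute v1 u.
    apply: (NC_comm (i := inord j)); [exact: Vg_N Hv1 | exact: Xword_N].
  by rewrite (catA v1) C -catA.
- exists u, v; split => //; split => //. by rewrite -E'.
Qed.

Lemma wpow_step m (i : 'I_m) e a : exists b, (i, e) :: wpow i a =R wpow i b.
Proof.
case: e; case: a => [k|k].
- by exists (Posz k.+1).
- case: k => [|k].
  + exists 0%R. exact: (rf_cancel [::] [::] (i, true)).
  + exists (Negz k). exact: (rf_cancel [::] (nseq k.+1 (i, false)) (i, true)).
- case: k => [|k].
  + by exists (Negz 0).
  + exists (Posz k). exact: (rf_cancel [::] (nseq k (i, true)) (i, false)).
- by exists (Negz k.+1).
Qed.

Lemma Xword_wpow n j (u : word n.+1) : Xword j u -> exists a, u =R wpow (inord j) a.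
Proof.
elim: u => [|[i e] u IH] /= H; first by exists 0%R.
move/andP: H => [/eqP Ei /IH [a Ea]]; subst i.
have := @wpow_step n.+1 (inord j) e a. case=> b Eb.
exists b. rewrite -Eb. exact: (cat_Proper (rf_refl [:: (inord j, e)]) Ea).
Qed.

Definition proj m b (w : word m) := filter (fun a : letter m => val a.1 < b) w.

Lemma claimB n j (x : word n.+1) : all (fun a : letter n.+1 => val a.1 < j.+1) x ->
  exists w, Nj j w /\ x =R w ++ proj j x.
Proof.
elim: x => [|a x IH] /=; first by move=> _; exists [::]; split => //; exact: NC0.
move=> /andP[Ha /IH [w [Hw E]]].
rewrite /proj /= -/(proj j x).
case: ifP => aj.
- exists (cj (winv [:: a]) w); split; first exact: NC_cj.
  rewrite -cat1s {1}E /cj winvK -!catA.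
  have -> : winv [:: a] ++ a :: proj j x = winv [:: a] ++ ([:: a] ++ proj j x) by [].
  by rewrite Kc.
- have ej : val a.1 = j by apply/eqP; rewrite eqn_leq -ltnS Ha leqNgt aj.
  exists ([:: a] ++ w); split.
  + apply: NC_cat => //. case: a ej {Ha aj} => i e /= /letter_eq ->. exact: NC_letter.
  + by rewrite -cat1s {1}E catA.
Qed.
Fixpoint Cr n j (r : nat) (w : word n.+1) : Prop :=
  match r with
  | 0 => Nj j w
  | r'.+1 => exists c a h, Cr j r' c /\ w =R cj h (wcomm c [:: a])
  end.

Lemma Cr_N n j r (w : word n.+1) : Cr j r w -> Nj j w.
Proof.
elim: r w => [|r IH] w /=; first by [].
move=> [c [a [h [Hc E]]]]. rewrite /Nj E. apply: NC_cj. apply: NC_wcomm. exact: IH.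
Qed.

Lemma Cr_eq n j r (w w' : word n.+1) : Cr j r w -> w =R w' -> Cr j r w'.
Proof.
case: r => [|r] /=; first by move=> H E; rewrite -E.
move=> [c [a [h [Hc E]]]] E'. exists c, a, h; split => //. by rewrite -E'.
Qed.

Lemma Cr_cj n j r (g w : word n.+1) : Cr j r w -> Cr j r (cj g w).
Proof.
case: r => [|r] /=; first exact: NC_cj.
move=> [c [a [h [Hc E]]]]. exists c, a, (h ++ g); split => //. by rewrite E cjcj.
Qed.

Lemma Cr_base n j r (c : word n.+1) a : Cr j r c -> Cr j r.+1 (wcomm c [:: a]).
Proof. move=> Hc /=. exists c, a, [::]; split => //. by rewrite cj_nil. Qed.

Lemma Cr_W n j r (w : word n.+1) : Cr j r w ->
  w =R [::] \/ exists S : seq 'I_n.+1, [/\ uniq S, inord j \notin S, size S = r,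
     Nj j w & forall i, i \in S -> NC i w].
Proof.
elim: r w => [|r IH] w /=.
- move=> Hw; right; exists [::]; split => //.
move=> [c [a [h [Hc E]]]].
have Hn : Nj j w by apply: (@Cr_N n j r.+1); exists c, a, h.
case: (IH c Hc) => [Ec|[S [uS jS sS Nc SC]]].
- left. by rewrite E Ec wcomm_nil_l cj_nilw.
case: a E => i e E.
have Hcomm : (i == inord j) || (i \in S) -> w =R [::].
  move=> Hi. rewrite E wcomm_commute ?cj_nilw //.
  apply: (NC_comm (i := i)); last exact: NC_letter.
  case/orP: Hi => [/eqP ->|/SC] //.
case Hi : ((i == inord j) || (i \in S)); first by left; apply: Hcomm.
move/negbT: Hi; rewrite negb_or => /andP[nij niS].
right; exists (i :: S); split => //.
- by rewrite /= niS.
- by rewrite in_cons negb_or eq_sym nij.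
- by rewrite /= sS.
move=> i'; rewrite in_cons => /orP[/eqP ->|/SC H]; rewrite E; apply: NC_cj.
- have -> : wcomm c [:: (i, e)] = cj c [:: (i, ~~ e)] ++ [:: (i, e)] by norm.
  apply: NC_cat; [apply: NC_cj|]; exact: NC_letter.
- apply: NC_wcomm; exact: H.
Qed.

Lemma Cr_vanish n j (w : word n.+1) : Cr j n.+1 w -> w =R [::].
Proof.
case/Cr_W => // -[S [uS jS sS _ _]].
have : size S <= #|predC1 (inord j : 'I_n.+1)|.
  rewrite cardE. apply: uniq_leq_size => // i iS.
  rewrite mem_enum /=. apply: contraNneq jS => <-. by [].
by rewrite cardC1 card_ord sS ltnn.
Qed.

Lemma Cr_vanish_ge n j r (w : word n.+1) : n < r -> Cr j r w -> w =R [::].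
Proof.
move=> nr /Cr_W [//|[S [uS jS sS _ _]]].
have : size S <= #|predC1 (inord j : 'I_n.+1)|.
  rewrite cardE. apply: uniq_leq_size => // i iS.
  rewrite mem_enum /=. apply: contraNneq jS => <-. by [].
by rewrite cardC1 card_ord sS leqNgt nr.
Qed.

Inductive PC n j r : word n.+1 -> Prop :=
| PC0 : PC j r [::]
| PCc c w : Cr j r c -> PC j r w -> PC j r (c ++ w).

Lemma PC_cat n j r (u v : word n.+1) : PC j r u -> PC j r v -> PC j r (u ++ v).
Proof. elim=> [|c w Hc _ IH] Hv //. rewrite -catA. apply: PCc => //. exact: IH. Qed.

Lemma PC_cj n j r (g u : word n.+1) : PC j r u -> exists w, PC j r w /\ cj g u =R w.
Proof.
elim=> [|c w Hc _ [w' [Hw' E]]]; first by exists [::]; split; [exact: PC0 | exact: cj_nilw].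
exists (cj g c ++ w'); split; first by apply: PCc => //; exact: Cr_cj.
by rewrite cj_cat E.
Qed.

Lemma L1 n j r (u : word n.+1) g : Cr j r u -> exists w, PC j r.+1 w /\ wcomm u g =R w.
Proof.
move=> Hu; elim: g => [|a g [w [Hw E]]].
- exists [::]; split; [exact: PC0 | exact: wcomm_nil_r].
exists (w ++ cj g (wcomm u [:: a])); split.
- apply: PC_cat => //. rewrite -[cj g _]cats0. apply: PCc; last exact: PC0.
  exists u, a, g; split => //.
- by rewrite -cat1s I2 E.
Qed.
Lemma L2 n j r (u : word n.+1) g : PC j r u -> exists w, PC j r.+1 w /\ wcomm u g =R w.
Proof.
elim=> [|c u' Hc _ [w [Hw E]]].
- exists [::]; split; [exact: PC0 | exact: wcomm_nil_l].
have [w1 [Hw1 E1]] := L1 g Hc.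
have [w2 [Hw2 E2]] := PC_cj u' Hw1.
exists (w2 ++ w); split; first exact: PC_cat.
by rewrite I3 E1 E2 E.
Qed.

Lemma PC_Vg n j r y (w : word n.+1) : (forall c, Cr j r c -> Vg j y c) -> PC j r w -> Vg j y w.
Proof.
move=> H; elim=> [|c w' Hc _ IH]; first exact: Vg_nil.
apply: Vg_cat => //. exact: H.
Qed.

Definition yOK n j (y : nat -> word n.+1) :=
  forall k, k \in Lset n j -> exists g e, y k =R cj g [:: (inord k, e)].

Lemma Qstep n j y r : yOK j y -> (forall c, Cr j r.+2 c -> Vg j y c) ->
  forall (c : word n.+1), Cr j r.+1 c -> Vg j y c.
Proof.
move=> Hy Hnext.
have HP : forall w, PC j r.+2 w -> Vg j y w by move=> w; exact: PC_Vg.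
have Lv : forall u g, Cr j r.+1 u -> Vg j y (wcomm u g).
  move=> u g Hu. have [w [Hw E]] := L1 g Hu. rewrite E. exact: HP.
have Lv2 : forall u g, PC j r.+1 u -> Vg j y (wcomm u g).
  move=> u g Hu. have [w [Hw E]] := L2 g Hu. rewrite E. exact: HP.
move=> c /= [c' [a [h [Hc' E]]]].
have Hu : Vg j y (wcomm c' [:: a]).
  case: a E => i e E.
  case: (eqVneq (val i) j) => [ij|nij].
  - rewrite wcomm_commute; first exact: Vg_nil.
    apply: (NC_comm (i := inord j)); first exact: (Cr_N Hc').
    rewrite -(letter_eq ij); exact: NC_letter.
  have kL : val i \in Lset n j by rewrite mem_Lset ltn_ord.
  have [g [e0 Eg]] := Hy _ kL.
  rewrite -(letter_eq (erefl (val i))) in Eg.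
  have [hh [b [Ea Hb]]] : exists hh b, [:: (i, e)] =R cj hh b /\
      (b = y (val i) \/ b = winv (y (val i))).
    exists (winv g).
    case: (eqVneq e e0) => [->|ne].
    - exists (y (val i)); split; last by left. by rewrite Eg cjK.
    - exists (winv (y (val i))); split; last by right.
      rewrite Eg cj_winv cjK winv1 /flip /=.
      by case: e e0 ne {E Eg} => -[].
  rewrite Ea I4.
  have Nc : Nj j (cj (winv hh) c') by apply: NC_cj; exact: (Cr_N Hc').
  have Vv : Vg j y (wcomm (cj (winv hh) c') b).
    case: Hb => ->; [exact: Vg_single | exact: Vg_single_inv].
  have [wv [Hwv Ev]] := L1 b (Cr_cj (winv hh) Hc').
  rewrite I1. apply: Vg_cat => //. rewrite Ev. exact: Lv2.
rewrite E I1. apply: Vg_cat => //. apply: Lv. exact: Cr_base.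
Qed.

Lemma Q_all n j y : yOK j y -> forall r c, 0 < r -> Cr j r c -> Vg j y (c : word n.+1).
Proof.
move=> Hy.
suff H : forall t r, n.+1 <= r + t -> 0 < r -> forall c, Cr j r c -> Vg j y c.
  move=> r c r0; exact: (H n.+1 r (leq_addl _ _) r0).
elim=> [|t IH] r Hrt r0 c Hc.
- rewrite addn0 in Hrt. rewrite (Cr_vanish_ge Hrt Hc). exact: Vg_nil.
case: (ltnP n r) => nr.
- rewrite (Cr_vanish_ge nr Hc). exact: Vg_nil.
case: r r0 Hrt nr Hc => [//|r] _ Hrt nr Hc.
apply: (Qstep Hy) Hc => c' Hc'.
apply: (IH r.+2) => //. by rewrite addSnnS.
Qed.

Lemma KL n j y (v : word n.+1) : yOK j y -> Vg j (@gN n) v -> Vg j y v.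
Proof.
move=> Hy [m [Hm E]]. rewrite E.
elim: (Lset n j) => [|k l IH]; first exact: Vg_nil.
rewrite F_cons. apply: Vg_cat => //.
apply: (Q_all Hy (r := 1)) => //. apply: Cr_base; exact: Hm.
Qed.
Definition formN n (form : 'I_n -> bool) (k : nat) : bool :=
  if insub k is Some k' then form k' else true.
Definition zcN n (form : 'I_n -> bool) (k : nat) (w : word n.+1) : word n.+1 :=
  if formN form k then wcomm w (gN n k) else wcomm (gN n k) w.
Definition Z n (form : 'I_n -> bool) (l : seq nat) (om : nat -> word n.+1) :=
  flatten [seq zcN form k (om k) | k <- l].

Lemma Z_ext n form l (om om' : nat -> word n.+1) :
  (forall k, k \in l -> om k = om' k) -> Z form l om = Z form l om'.
Proof. move=> H; rewrite /Z; congr flatten; apply/eq_in_map => k /H ->. by []. Qed.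

Lemma Z_cons n form k l (om : nat -> word n.+1) :
  Z form (k :: l) om = zcN form k (om k) ++ Z form l om.
Proof. by []. Qed.

Lemma Z_cat n form l1 l2 (om : nat -> word n.+1) :
  Z form (l1 ++ l2) om = Z form l1 om ++ Z form l2 om.
Proof. by rewrite /Z map_cat flatten_cat. Qed.

Lemma move_right m (A B : word m) : A ++ B =R B ++ cj B A.
Proof. grp. Qed.

Lemma cjK' m (h x : word m) : cj h (cj (winv h) x) =R x.
Proof. grp. Qed.

Lemma twist n form (l : seq nat) (om : nat -> word n.+1) : uniq l ->
  exists y : nat -> word n.+1,
    (forall k, k \in l -> exists g e, y k =R cj g [:: (inord k, e)]) /\
    forall mm, exists om', Z form l om' =R Z form l om ++ F l mm y.
Proof.
elim: l om => [|k l IH] om.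
- move=> _; exists (fun _ => [::]); split => // mm. exists om. by [].
move=> /= /andP[kl ul].
have [y' [Hy' Hm']] := IH om ul.
set Zt := Z form l om.
set x := gN n k.
set yb := if formN form k then cj (om k ++ x) x else cj (om k) (winv x).
set pre := if formN form k then wcomm (om k) x else x ++ wcomm x (om k).
exists (fun i => if i == k then cj Zt yb else y' i); split.
- move=> i; rewrite in_cons => /orP[/eqP ->|il].
  + rewrite eqxx /yb /x /gN. case: (formN form k).
    * exists (om k ++ [:: (inord k, true)] ++ Zt), true. by rewrite cjcj -catA.
    * exists (om k ++ Zt), false. by rewrite cjcj.
  + have -> : (i == k) = false by apply/negbTE; apply: contraNneq kl => <-.
    exact: Hy'.
move=> mm.
have [om'' Eom''] := Hm' mm.
set nk := cj (winv (pre ++ Zt)) (mm k).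
exists (fun i => if i == k then om k ++ nk else om'' i).
have Eext : Z form l (fun i => if i == k then om k ++ nk else om'' i) = Z form l om''.
  apply: Z_ext => i il. have -> // : (i == k) = false.
  by apply/negbTE; apply: contraNneq kl => <-.
have Fext : F l mm (fun i => if i == k then cj Zt yb else y' i) = F l mm y'.
  apply: F_ext => i il; split => //. have -> // : (i == k) = false.
  by apply/negbTE; apply: contraNneq kl => <-.
rewrite !Z_cons Eext F_cons Fext eqxx Eom''.
have Ez : zcN form k (om k ++ nk) =R zcN form k (om k) ++ wcomm (cj pre nk) yb.
  rewrite /zcN /pre /yb -/x. case: (formN form k); [exact: I6 | exact: I7].
have K : wcomm (cj pre nk) yb ++ Zt =R Zt ++ wcomm (mm k) (cj Zt yb).
  by rewrite move_right cj_comm /nk cjcj cjK'.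
rewrite Ez.
transitivity (zcN form k (om k) ++ (wcomm (cj pre nk) yb ++ Zt) ++ F l mm y');
  first by rewrite !catA.
by rewrite K !catA.
Qed.

Lemma proj_cat m b (u v : word m) : proj b (u ++ v) = proj b u ++ proj b v.
Proof. exact: filter_cat. Qed.

Lemma proj_winv m b (u : word m) : proj b (winv u) = winv (proj b u).
Proof.
rewrite /proj /winv filter_rev filter_map. congr rev.
Qed.

Lemma proj_wcomm m b (u v : word m) : proj b (wcomm u v) = wcomm (proj b u) (proj b v).
Proof. by rewrite /wcomm !proj_cat !proj_winv. Qed.

Lemma proj_eq m b (u v : word m) : u =R v -> proj b u =R proj b v.
Proof.
elim=> {u v}.
- by [].
- move=> u v _ H; by symmetry.
- move=> u v w _ H1 _ H2; by rewrite H1.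
- move=> u v a. rewrite !proj_cat /proj /=.
  case: ifP => H; rewrite H; last by []. exact: rf_cancel.
- move=> u v g i. rewrite !proj_cat proj_winv /proj /gen /=.
  case: ifP => H; rewrite ?H; last by rewrite !cat0s.
  exact: (rf_rel _ _ (proj b g) i).
Qed.

Lemma proj_id m b (u : word m) : all (fun a : letter m => val a.1 < b) u -> proj b u = u.
Proof. by move/all_filterP. Qed.
Definition Pw n (al : nat -> int) (s : seq nat) : word n.+1 :=
  flatten [seq wpow (inord i : 'I_n.+1) (al i) | i <- s].

Definition Pj n (form : 'I_n -> bool) j := forall x : word n.+1,
  all (fun a : letter n.+1 => val a.1 < j) x ->
  exists (al : nat -> int) (om : nat -> word n.+1),
  x =R Pw n al (rev (iota 0 j)) ++ Z form (iota 0 j.-1) om.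

Lemma val_inord n k : k < n.+1 -> val (inord k : 'I_n.+1) = k.
Proof. exact: inordK. Qed.

Lemma all_wpow m (i : 'I_m) a : all (fun x : letter m => x.1 == i) (wpow i a).
Proof. case: a => k /=; rewrite all_nseq /= eqxx orbT //. Qed.

Lemma proj_wpow m b (i : 'I_m) a : val i < b -> proj b (wpow i a) = wpow i a.
Proof.
move=> ib; apply: proj_id. apply/allP => x /(allP (all_wpow i a)) /eqP ->. exact: ib.
Qed.

Lemma proj_Pw n b al s : (forall i, i \in s -> i < n.+1 /\ i < b) ->
  proj b (Pw n al s) = Pw n al s.
Proof.
elim: s => [|i s IH] H //.
rewrite /Pw /= proj_cat -/(Pw n al s) IH; last by move=> k ks; apply: H; rewrite in_cons ks orbT.
have [i1 ib] := H i (mem_head _ _).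
by rewrite proj_wpow // val_inord.
Qed.

Lemma proj_gN n b k : k < n.+1 -> proj b (gN n k) = if k < b then gN n k else [::].
Proof. move=> kn. by rewrite /proj /gN /= val_inord. Qed.

Lemma proj_Z n form b l (om : nat -> word n.+1) : (forall k, k \in l -> k < n.+1 /\ k < b) ->
  proj b (Z form l om) = Z form l (fun k => proj b (om k)).
Proof.
elim: l => [|k l IH] H //.
rewrite !Z_cons proj_cat IH; last by move=> i il; apply: H; rewrite in_cons il orbT.
have [k1 kb] := H k (mem_head _ _).
by rewrite /zcN; case: (formN form k); rewrite proj_wcomm proj_gN // kb.
Qed.

Lemma proj_F n b l (mm : nat -> word n.+1) : (forall k, k \in l -> k < n.+1 /\ b <= k) ->
  proj b (F l mm (@gN n)) =R [::].
Proof.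
elim: l => [|k l IH] H //.
rewrite F_cons proj_cat IH; last by move=> i il; apply: H; rewrite in_cons il orbT.
have [k1 kb] := H k (mem_head _ _).
rewrite proj_wcomm proj_gN // ltnNge kb /= cats0. exact: wcomm_nil_r.
Qed.

Lemma Zpad n form j (om : nat -> word n.+1) :
  Z form (iota 0 j.-1) om =R Z form (iota 0 j) (fun k => if k < j.-1 then om k else [::]).
Proof.
case: j => [|j]; first by [].
rewrite -[j.+1.-1]/j.
have -> : iota 0 j.+1 = iota 0 j ++ [:: j] by rewrite -addn1 iotaD.
rewrite Z_cat.
rewrite (@Z_ext n form (iota 0 j) (fun k => if k < j then om k else [::]) om); last by move=> k; rewrite mem_iota add0n => /andP[_ ->].
rewrite Z_cons ltnn /Z /= cats0 /zcN.
case: (formN form j); by rewrite ?wcomm_nil_l ?wcomm_nil_r cats0.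
Qed.

Lemma Lset_split n j : j < n.+1 -> Lset n j = iota 0 j ++ iota j.+1 (n - j).
Proof.
move=> jn. rewrite /Lset.
have -> : n.+1 = j + (n - j).+1 by rewrite addnS subnKC // -ltnS.
rewrite iotaD filter_cat add0n /= eqxx.
congr cat; apply/all_filterP/allP => k; rewrite mem_iota.
- by move=> /andP[_ /= kj]; rewrite neq_ltn kj.
- by move=> /andP[jk _]; rewrite neq_ltn jk orbT.
Qed.

Lemma P0 n form : @Pj n form 0.
Proof.
move=> [|a x] //= _. exists (fun _ => 0%R), (fun _ => [::]). by [].
Qed.
Lemma Pw_ext n (al al' : nat -> int) s : (forall i, i \in s -> al i = al' i) ->
  Pw n al s = Pw n al' s.
Proof. move=> H; rewrite /Pw; congr flatten; apply/eq_in_map => i /H ->. by []. Qed.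

Lemma Pstep n form j : j < n.+1 -> @Pj n form j -> Pj form j.+1.
Proof.
move=> jn IH x Hx.
have [w [Hw Ex]] := claimB Hx.
have Hp : all (fun a : letter n.+1 => val a.1 < j) (proj j x) by exact: filter_all.
have [al [om Eh]] := IH _ Hp.
have [u [v [Xu [Vv Ew]]]] := claimA Hw.
have [a Eu] := Xword_wpow Xu.
set P := Pw n al (rev (iota 0 j)).
set om1 := fun k => if k < j.-1 then om k else [::].
have [y [Hy Hm]] := twist form om1 (iota_uniq 0 j).
set yf := fun k => if k < j then y k else gN n k.
have Hyf : yOK j yf.
  move=> k; rewrite mem_Lset => /andP[kn kj]. rewrite /yf. case: ifP => kj'.
  - apply: Hy; by rewrite mem_iota.
  - exists [::], true. by rewrite cj_nil.
set Zold := Z form (iota 0 j.-1) om.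
have Vv' : Vg j (@gN n) (cj (P ++ Zold) v) by apply: Vg_cj_gN.
have [mm [Hmm Em]] := KL Hyf Vv'.
have [om' Eom'] := Hm mm.
have E1 : x =R wpow (inord j) a ++ P ++ Z form (iota 0 j) om' ++ F (iota j.+1 (n - j)) mm (@gN n).
  rewrite {1}Ex Ew Eh -/P -/Zold -catA Eu.
  apply: cat_Proper => //.
  rewrite move_right Em (Lset_split jn) F_cat.
  rewrite (@F_ext n (iota 0 j) mm mm yf y); last first.
    by move=> k; rewrite mem_iota /yf => /andP[_ ->].
  rewrite (@F_ext n (iota j.+1 (n - j)) mm mm yf (@gN n)); last first.
    move=> k; rewrite mem_iota /yf => /andP[jk _]; split => //.
    by rewrite ltnNge ltnW.
  rewrite Eom' /Zold Zpad -/om1. by rewrite !catA.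
have E2 := proj_eq j.+1 E1.
rewrite proj_id // !proj_cat proj_wpow ?val_inord // proj_Pw in E2; last first.
  move=> i; rewrite mem_rev mem_iota add0n leq0n /= => ij.
  split; [exact: leq_trans ij (ltnW jn) | exact: ltnW].
rewrite proj_Z in E2; last first.
  move=> i; rewrite mem_iota add0n leq0n /= => ij.
  split; [exact: leq_trans ij (ltnW jn) | exact: ltnW].
rewrite proj_F in E2; last first.
  move=> i; rewrite mem_iota => /andP[ji ilt]; split => //.
  by rewrite addSn subnKC // in ilt; apply: ltnW.
exists (fun i => if i == j then a else al i), (fun k => proj j.+1 (om' k)).
rewrite E2 cats0 -[j.+1.-1]/j.
have -> : rev (iota 0 j.+1) = j :: rev (iota 0 j) by rewrite -addn1 iotaD rev_cat.
rewrite /Pw /= eqxx.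
have -> : flatten [seq wpow (inord i : 'I_n.+1) (if i == j then a else al i) | i <- rev (iota 0 j)]
   = Pw n al (rev (iota 0 j)).
  apply: (@Pw_ext n (fun i => if i == j then a else al i) al).
  by move=> i; rewrite mem_rev mem_iota add0n leq0n /= => ij; rewrite ltn_eqF.
by rewrite catA.
Qed.
Lemma Pall n form j : j <= n.+1 -> @Pj n form j.
Proof.
elim: j => [|j IH] jn; first exact: P0.
apply: Pstep => //. apply: IH. exact: ltnW.
Qed.

Theorem theorem4p1 (m : nat) (hm : (1 <= m)%N) (x : word m)
    (form : 'I_m.-1 -> bool) :
  exists (alpha : 'I_m -> int) (omega : 'I_m.-1 -> word m),
    rf_eq x
      (flatten [seq wpow i (alpha i) | i <- rev (enum 'I_m)] ++
       flatten [seq (if form j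
                     then wcomm (omega j) (gen (widen_ord (leq_pred m) j))
                     else wcomm (gen (widen_ord (leq_pred m) j)) (omega j))
               | j <- enum 'I_m.-1]).
Proof.
case: m hm x form => [//|n] _ x form.
have Hx : all (fun a : letter n.+1 => val a.1 < n.+1) x by apply/allP => a _; exact: ltn_ord.
have [al [om E]] := @Pall n form n.+1 (leqnn _) x Hx.
exists (fun i => al (val i)), (fun j => om (val j)).
rewrite E.
have -> : Pw n al (rev (iota 0 n.+1)) =
    flatten [seq wpow i (al (val i)) | i <- rev (enum 'I_n.+1)].
  rewrite /Pw -val_enum_ord -map_rev -map_comp. congr flatten; apply: eq_map => i /=.
  by rewrite inord_val.
have -> : Z form (iota 0 n.+1.-1) om =
    flatten [seq (if form j then wcomm (om (val j)) (gen (widen_ord (leq_pred n.+1) j))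
                  else wcomm (gen (widen_ord (leq_pred n.+1) j)) (om (val j))) | j <- enum 'I_n.+1.-1].
  rewrite /Z -[n.+1.-1]/n -val_enum_ord -map_comp. congr flatten; apply: eq_map => j /=.
  have Hf : formN form (val j) = form j by rewrite /formN valK.
  have Hg : gN n (val j) = gen (widen_ord (leq_pred n.+1) j).
    rewrite /gN /gen; congr [:: (_, _)]; apply: val_inj => /=.
    by rewrite val_inord // ltnS ltnW.
  by rewrite /zcN Hf Hg.
by [].
Qed.
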